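(* Let $s,t\ge0$ be integers. For each integer $m$ with $0\le m<q^{b-1}$ let $\Psi_m=\{(i,j)\in\mathbb{Z}^2:\ 0\le i<q^c-1,\ \ -t\le q^{a-1}N_b\,i-q^{b-1}N_c\,j+N_cm,\ \ -s-(q^c-1)q\le -q^ai+(q^c-1)j\}$. Then $$\#\Psi_m=\frac{(q^c+1)q}{2}+(q-1)\left\lfloor\frac{t+N_cm}{q^{b-1}}\right\rfloor+s,$$ and $$\sum_{m=0}^{q^{b-1}-1}\#\Psi_m=\frac12\left(q^{c+b-1}+q^{c+b}-q^c+q\right)+q^{b-1}s+(q-1)t.$$
   Context: $q$ is a power of a prime $p$, $b\ge1$ an integer, $a=b+1$, $c=a+b$, and $N_k=(q^k-1)/(q-1)$ for $k\ge1$. *)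

(* Defs.v *)
From mathcomp Require Import all_boot all_order all_algebra.
Set Implicit Arguments. Unset Strict Implicit. Unset Printing Implicit Defensive.
Import Order.TTheory GRing.Theory Num.Theory.

(* N_k = (q^k - 1)/(q - 1)  (an exact division for q >= 2) *)
Definition Nk (q k : nat) : nat := ((q ^ k - 1) %/ (q - 1))%N.

Definition Psi (q b s t m : nat) : pred (int * int) :=
  fun ij =>
    let a := b.+1 in
    let c := (a + b)%N in
    let i := ij.1 in
    let j := ij.2 in
    [&& (0 <= i)%R,
        (i < (q ^ c)%N%:Z - 1)%R,
        (- (t%:Z) <= (q ^ (a - 1))%N%:Z * (Nk q b)%:Z * i
                     - (q ^ (b - 1))%N%:Z * (Nk q c)%:Z * j
                     + (Nk q c)%:Z * m%:Z)%R
      & (- (s%:Z) - ((q ^ c)%N%:Z - 1) * q%:Z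
           <= - (q ^ a)%N%:Z * i + ((q ^ c)%N%:Z - 1) * j)%R].

Definition has_card (P : pred (int * int)) (n : nat) : Prop :=
  exists l : seq (int * int),
    [/\ uniq l, (forall x, (x \in l) = P x) & size l = n].

(* Main.v *)
Require Import Defs.
From mathcomp Require Import all_boot all_order all_algebra.
From mathcomp Require Import zify ring lra.
Set Implicit Arguments. Unset Strict Implicit. Unset Printing Implicit Defensive.
Import Order.TTheory GRing.Theory Num.Theory.
Local Open Scope ring_scope.

Lemma sum_iota_int (M : nat) : 2 * \sum_(0 <= i < M) (i%:Z) = M%:Z * (M%:Z - 1).
Proof.
elim: M => [|M IH]; first by rewrite big_geq.
rewrite big_nat_recr //= mulrDr IH. rewrite intS. ring.
Qed.

Lemma sum_mod_perm (a x : int) (M : nat) : (0 < M)%N -> coprimez a M ->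
  \sum_(0 <= i < M) ((a * i%:Z + x) %% M%:Z)%Z = \sum_(0 <= i < M) (i%:Z).
Proof.
move=> M0 cop.
have Mn0 : M%:Z != 0 by lia.
pose g i := `|((a * i%:Z + x) %% M%:Z)%Z|%N.
have gE i : ((a * i%:Z + x) %% M%:Z)%Z = (g i)%:Z by rewrite /g gez0_abs // modz_ge0.
have glt i : (g i < M)%N.
  by rewrite -ltz_nat -gE ltz_pmod // ltz_nat.
under eq_bigr do rewrite gE.
rewrite -!(big_map g xpredT (fun j => j%:Z)).
apply: perm_big.
have ui : uniq (map g (iota 0 M)).
  rewrite map_inj_in_uniq ?iota_uniq // => i j; rewrite !mem_iota /= !add0n => iM jM gij.
  have : (M%:Z %| a * (i%:Z - j%:Z))%Z.
    rewrite mulrBr -eqz_mod_dvd.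
    rewrite -(eqz_modDr x) . by rewrite !gE gij.
  rewrite Gauss_dvdzr; last by rewrite coprimez_sym.
  rewrite dvdzE => hd.
  case: (eqVneq i j) => // nij.
  have e : `|i%:Z - j%:Z|%N = (if (j <= i)%N then i - j else j - i)%N by case: (leqP j i) => h; lia.
  rewrite e in hd.
  have : (0 < (if (j <= i)%N then i - j else j - i))%N by case: (leqP j i) => h; lia.
  move/dvdn_leq => /(_ _ hd).
  by case: (leqP j i) => h; lia.
have sub : {subset map g (iota 0 M) <= iota 0 M}.
  by move=> y /mapP[z _ ->]; rewrite mem_iota /= add0n glt.
have le : (size (iota 0 M) <= size (map g (iota 0 M)))%N by rewrite size_map.
have [_ eqm] := uniq_min_size ui sub le.
by apply: uniq_perm => //; rewrite /index_iota subn0 ?iota_uniq.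
Qed.

Lemma sum_floor (a x : int) (M : nat) : (0 < M)%N -> coprimez a M ->
  2 * \sum_(0 <= i < M) ((a * i%:Z + x) %/ M%:Z)%Z = (a - 1) * (M%:Z - 1) + 2 * x.
Proof.
move=> M0 cop.
have Mn0 : M%:Z != 0 by lia.
have e1 : \sum_(0 <= i < M) (a * i%:Z + x) =
   M%:Z * \sum_(0 <= i < M) ((a * i%:Z + x) %/ M%:Z)%Z + \sum_(0 <= i < M) ((a * i%:Z + x) %% M%:Z)%Z.
  rewrite big_distrr -big_split /=; apply: eq_bigr => i _.
  by rewrite {1}(divz_eq (a * i%:Z + x) M) mulrC.
have e2 : \sum_(0 <= i < M) (a * i%:Z + x) = a * \sum_(0 <= i < M) i%:Z + M%:Z * x.
  rewrite big_split /= -big_distrr /=; congr (_ + _).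
  by rewrite sumr_const_nat subn0 -mulr_natl natz.
rewrite sum_mod_perm // in e1.
have I2 := sum_iota_int M.
apply: (mulfI Mn0).
set S := \sum_(0 <= i < M) ((a * i%:Z + x) %/ M%:Z)%Z in e1 *.
set I := \sum_(0 <= i < M) (i%:Z) in e1 e2 I2.
have : M%:Z * S = a * I + M%:Z * x - I by rewrite -e2 e1; ring.
move=> h.
rewrite mulrA (mulrC M%:Z) -mulrA h.
have -> : 2 * (a * I + M%:Z * x - I) = (a - 1) * (2 * I) + 2 * M%:Z * x by ring.
rewrite I2; ring.
Qed.

Lemma sum_floor_blocks (u y : int) (v k : nat) : (0 < v)%N -> coprimez u v ->
  2 * \sum_(0 <= i < (k * v)%N) ((u * i%:Z + y) %/ v%:Z)%Z =
  k%:Z * ((u - 1) * (v%:Z - 1) + 2 * y) + u * v%:Z * k%:Z * (k%:Z - 1).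
Proof.
move=> v0 cop.
have vn0 : v%:Z != 0 by lia.
elim: k => [|k IH]; first by rewrite mul0n big_geq //; ring.
rewrite mulSn addnC (@big_cat_nat _ _ _ (k * v)%N) //=; last by rewrite leq_addr.
rewrite mulrDr IH.
have -> : \sum_((k * v)%N <= i < (k * v + v)%N) ((u * i%:Z + y) %/ v%:Z)%Z =
          \sum_(0 <= i < v) (u * k%:Z + ((u * i%:Z + y) %/ v%:Z)%Z).
  rewrite -{1}(add0n (k * v)%N) big_addn addKn; apply: eq_bigr => i _.
  have -> : u * (i + k * v)%N%:Z + y = (u * k%:Z) * v%:Z + (u * i%:Z + y) by rewrite PoszD PoszM; ring.
  by rewrite divzMDl.
rewrite big_split /= sumr_const_nat subn0.
have h := sum_floor y v0 cop.
set S := \sum_(0 <= i < v) _ in h *.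
rewrite [2 * (_ + S)]mulrDr h -mulr_natr natz intS; ring.
Qed.
Lemma nonneg_aux (H L u i y v M q qQ s : int) : u*i + y < (H+1)*v -> - qQ*i + (s + M*q) < (L+1)*M -> (q-1)*u = qQ - q -> M = (q-1)*v -> 0 <= y -> 0 <= s -> 0 <= i -> i < M -> 2 <= q -> 0 <= H + L + 1.
Proof.
move=> hH hL hu hM y0 s0 i0 iM q2.
have h1 : (q-1)*(u*i + y) < (q-1)*((H+1)*v) by rewrite ltr_pM2l //; lia.
have e : M * (H + L + 2) = (q-1)*((H+1)*v) + (L+1)*M by rewrite hM; ring.
have e2 : (q-1)*(u*i + y) + (- qQ*i + (s + M*q)) = -(q*i) + (q-1)*y + s + M*q.
  have -> : (q-1)*(u*i+y) = ((q-1)*u)*i + (q-1)*y by ring.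
  rewrite hu; ring.
have h3 : 0 <= (q-1)*y by apply: mulr_ge0; lia.
have h4 : q * i < q * M by rewrite ltr_pM2l //; lia.
have : 0 < M * (H + L + 2) by nia.
rewrite pmulr_rgt0; last by lia.
lia.
Qed.

Definition predA (q P Nb Nc s t m : nat) : pred (int * int) :=
  fun ij => [&& (0 <= ij.1), (ij.1 < (q*(q*P)*(q*P))%N%:Z - 1),
       (- (t%:Z) <= (q*P)%N%:Z * Nb%:Z * ij.1 - P%:Z * Nc%:Z * ij.2 + Nc%:Z * m%:Z)
     & (- (s%:Z) - ((q*(q*P)*(q*P))%N%:Z - 1) * q%:Z <= - (q*(q*P))%N%:Z * ij.1 + ((q*(q*P)*(q*P))%N%:Z - 1) * ij.2)].

Lemma count_abs (q P Nb Nc s t m : nat) :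
  (1 < q)%N -> (0 < P)%N ->
  ((q-1) * Nb = q*P - 1)%N -> ((q-1)*Nc = q*(q*P)*(q*P) - 1)%N ->
  exists n, has_card (predA q P Nb Nc s t m) n
   /\ 2 * n%:Z = ((q*(q*P)*(q*P))%N%:Z + 1) * q%:Z + 2 * (q%:Z - 1) * ((t + Nc * m) %/ P)%N%:Z + 2 * s%:Z.
Proof.
move=> q1 P0 hNb hNc.
set Q := (q * P)%N in hNb hNc *.
set C := (q * Q * Q)%N in hNc *.
have Q1 : (1 <= Q)%N by rewrite /Q muln_gt0; lia.
have C1 : (1 <= C)%N by rewrite /C !muln_gt0; lia.
have EQ : Q%:Z = (q%:Z - 1) * Nb%:Z + 1 by nia.
set Mn := ((q-1) * Nc)%N.
have EC : C%:Z - 1 = Mn%:Z by rewrite /Mn; lia.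
have EC2 : C%:Z = q%:Z * Q%:Z * Q%:Z by rewrite /C !PoszM.
have EV : Nc%:Z = 1 + q%:Z * Nb%:Z * (1 + Q%:Z).
  have qn0 : q%:Z - 1 != 0 by lia.
  apply: (mulfI qn0).
  have -> : (q%:Z - 1) * Nc%:Z = Mn%:Z by rewrite /Mn; lia.
  rewrite -EC EC2 EQ; ring.
have EM : Mn%:Z = (q%:Z - 1) * Nc%:Z by rewrite /Mn; lia.
set y := ((t + Nc * m) %/ P)%N%:Z.
pose H (i : int) := ((q%:Z * Nb%:Z * i + y) %/ Nc%:Z)%Z.
pose L (i : int) := (((- (q * Q)%N%:Z) * i + (s%:Z + Mn%:Z * q%:Z)) %/ Mn%:Z)%Z.
have Nc0 : (0 < Nc)%N by lia.
have Mn0 : (0 < Mn)%N by rewrite /Mn muln_gt0; lia.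
have memE : forall i j, predA q P Nb Nc s t m (i, j) =
    [&& 0 <= i, i < Mn%:Z, j <= H i & - L i <= j].
  move=> i j; rewrite /predA /= EC.
  congr [&& _, _, _ & _].
    have eH : H i = (((q*P)%N%:Z * Nb%:Z * i + Nc%:Z * m%:Z + t%:Z) %/ (P%:Z * Nc%:Z))%Z.
      rewrite divzMA_ge0 //.
      have -> : (q*P)%N%:Z * Nb%:Z * i + Nc%:Z * m%:Z + t%:Z = (q%:Z * Nb%:Z * i) * P%:Z + (t + Nc * m)%N%:Z.
        rewrite PoszM PoszD PoszM; ring.
      rewrite divzMDl; last by lia.
      by rewrite divz_nat.
    rewrite eH lez_divRL; last by rewrite -PoszM ltz_nat muln_gt0 P0 Nc0.
    apply/idP/idP; lia.
  rewrite /L lerNl lez_divRL; last by rewrite ltz_nat.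
  apply/idP/idP; lia.
have nonneg : forall i : nat, (i < Mn)%N -> 0 <= H i%:Z + L i%:Z + 1.
  move=> i iM.
  apply: (@nonneg_aux _ _ (q%:Z * Nb%:Z) i%:Z y Nc%:Z Mn%:Z q%:Z (q * Q)%N%:Z s%:Z).
  - by apply: ltz_ceil; rewrite ltz_nat.
  - by apply: ltz_ceil; rewrite ltz_nat.
  - rewrite PoszM.
    have -> : (q%:Z - 1) * (q%:Z * Nb%:Z) = q%:Z * ((q%:Z - 1) * Nb%:Z) by ring.
    have -> : (q%:Z - 1) * Nb%:Z = Q%:Z - 1 by rewrite EQ; ring.
    ring.
  - exact: EM.
  - by [].
  - by [].
  - by [].
  - by rewrite ltz_nat.
  - lia.
pose cnt (i : nat) := absz (H i%:Z + L i%:Z + 1).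
pose rows (i : nat) := [seq - L i%:Z + k%:Z | k <- iota 0 (cnt i)].
pose l := [seq (Posz i, j) | i <- iota 0 Mn, j <- rows i].
exists (\sum_(0 <= i < Mn) cnt i)%N; split.
  exists l; split.
  - apply: allpairs_uniq_dep.
    + exact: iota_uniq.
    + move=> i _; rewrite map_inj_uniq ?iota_uniq // => k1 k2 /addrI; by case.
    + move=> [i1 j1] [i2 j2] _ _ /= [] e1 e2.
      by subst.
  - move=> [i0 j]; rewrite memE; apply/allpairsPdep/idP.
      case=> i [j' [iin jin]] [-> ->].
      rewrite mem_iota add0n in iin.
      move: jin => /mapP [k kin ->].
      rewrite mem_iota add0n in kin.
      have nn := nonneg i iin.
      have kc : k%:Z < H i%:Z + L i%:Z + 1.
        by move: kin; rewrite /cnt -ltz_nat gez0_abs.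
      apply/and4P; split; try lia.
      all: rewrite ?ltz_nat //.
    move=> /and4P [i0ge iM jH jL].
    have ei : i0 = (absz i0)%:Z by rewrite gez0_abs.
    have iin : (absz i0 < Mn)%N by rewrite -ltz_nat -ei.
    exists (absz i0), j; split.
    + by rewrite mem_iota add0n.
    + apply/mapP; exists (absz (j + L i0)).
        rewrite mem_iota add0n /cnt -ltz_nat -ei !gez0_abs; lia.
      rewrite gez0_abs; lia.
    + by rewrite -ei.
  - rewrite size_allpairs_dep sumnE big_map /index_iota subn0.
    by apply: eq_bigr => i _; rewrite size_map size_iota.
have sumZ : (\sum_(0 <= i < Mn) cnt i)%N%:Z = \sum_(0 <= i < Mn) (H i%:Z + L i%:Z + 1).
  rewrite (big_morph Posz PoszD (erefl _)).
  apply: eq_big_nat => i /andP [_ iM].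
  by rewrite /cnt gez0_abs // nonneg.
rewrite sumZ !big_split /= sumr_const_nat subn0.
have copH : coprimez (q%:Z * Nb%:Z) Nc%:Z.
  apply/coprimezP; exists (- (1 + Q%:Z), 1) => /=.
  rewrite EV; ring.
have copL : coprimez (- (q * Q)%N%:Z) Mn%:Z.
  rewrite coprimeNz; apply/coprimezP; exists (Q%:Z, -1) => /=.
  rewrite -EC EC2 PoszM; ring.
have hH := sum_floor_blocks y (q - 1) Nc0 copH.
have hL := sum_floor (s%:Z + Mn%:Z * q%:Z) Mn0 copL.
rewrite -/Mn in hH.
have eq1 : (q - 1)%N%:Z = q%:Z - 1 by lia.
rewrite eq1 in hH.
set SH := \sum_(0 <= i < Mn) H i%:Z in hH *.
set SL := \sum_(0 <= i < Mn) L i%:Z in hL *.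
have -> : 2 * (SH + SL + 1 *+ Mn) = 2 * SH + 2 * SL + 2 * Mn%:Z by rewrite -mulr_natl natz; ring.
have eqQ2 : (q * Q)%N%:Z = q%:Z * ((q%:Z - 1) * Nb%:Z + 1) by rewrite PoszM EQ.
rewrite /SH /SL hH hL eqQ2 EC2 EM EV EQ; ring.
Qed.

Lemma Nk_mul (q k : nat) : ((q - 1) * Nk q k = q ^ k - 1)%N.
Proof.
rewrite /Nk mulnC divnK // !subn1; exact: dvdn_pred_predX.
Qed.

Lemma half_of (N : nat) (z : int) : 2 * z = N%:Z -> (N %/ 2)%N%:Z = z.
Proof.
move=> h.
have z0 : 0 <= z by lia.
have -> : N = (2 * absz z)%N by apply/eqP; rewrite -eqz_nat PoszM gez0_abs // -h.
by rewrite mulKn // gez0_abs.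
Qed.

Lemma card_uniq (Pr : pred (int * int)) n1 n2 : has_card Pr n1 -> has_card Pr n2 -> n1 = n2.
Proof.
move=> [l1 [u1 m1 <-]] [l2 [u2 m2 <-]].
apply: perm_size; apply: uniq_perm => // x; by rewrite m1 m2.
Qed.

Lemma has_card_ext (P1 P2 : pred (int * int)) n : P1 =1 P2 -> has_card P1 n -> has_card P2 n.
Proof. by move=> e [l [u m s]]; exists l; split => // x; rewrite m e. Qed.

Theorem lemma2 (q b s t : nat)
  (hq : exists p k : nat, [/\ prime p, (0 < k)%N & q = (p ^ k)%N])
  (hb : (1 <= b)%N) :
  let a := b.+1 in
  let c := (a + b)%N in
  (forall m : nat, (m < q ^ (b - 1))%N ->
     has_card (Psi q b s t m)
       (((q ^ c + 1) * q) %/ 2 + (q - 1) * ((t + Nk q c * m) %/ q ^ (b - 1)) + s)%N)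
  /\
  (forall f : nat -> nat,
     (forall m : nat, (m < q ^ (b - 1))%N -> has_card (Psi q b s t m) (f m)) ->
     (\sum_(0 <= m < q ^ (b - 1)) f m)%N =
       ((q ^ (c + b - 1) + q ^ (c + b) - q ^ c + q) %/ 2
          + q ^ (b - 1) * s + (q - 1) * t)%N).
Proof.
have q1 : (1 < q)%N.
  case: hq => p [k [pp k0 ->]].
  rewrite -(exp1n k) ltn_exp2r //; exact: prime_gt1.
move=> a c.
set P := (q ^ (b - 1))%N.
have P0 : (0 < P)%N by rewrite expn_gt0; lia.
have eb : b = (b - 1).+1 by lia.
have eQ : (q ^ b)%N = (q * P)%N by rewrite {1}eb expnS.
have eA : (q ^ a)%N = (q * (q * P))%N by rewrite /a expnS eQ.
have eC : (q ^ c)%N = (q * (q * P) * (q * P))%N by rewrite /c /a addSn expnS expnD eQ mulnA.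
have hNb : ((q - 1) * Nk q b = q * P - 1)%N by rewrite Nk_mul eQ.
have hNc : ((q - 1) * Nk q c = q * (q * P) * (q * P) - 1)%N by rewrite Nk_mul eC.
have E : forall m, predA q P (Nk q b) (Nk q c) s t m =1 Psi q b s t m.
  move=> m [i j]; rewrite /Psi /predA /=.
  have -> : (b.+1 - 1)%N = b by lia.
  by rewrite eQ -/a eA -/c eC.
set C := (q * (q * P) * (q * P))%N in eC hNc.
have H0Z : 2 * (((q ^ c + 1) * q) %/ 2)%N%:Z = (C%:Z + 1) * q%:Z.
  have ev : (2 %| (q ^ c + 1) * q)%N.
    rewrite dvdn2 oddM oddD oddX; by case: (odd q); rewrite ?orbT ?andbF.
  by rewrite mulrC -PoszM divnK // PoszM PoszD eC.
have part1 : forall m : nat, (m < P)%N ->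
   has_card (Psi q b s t m)
     (((q ^ c + 1) * q) %/ 2 + (q - 1) * ((t + Nk q c * m) %/ P) + s)%N.
  move=> m mP.
  have [n [hc hn]] := count_abs s t m q1 P0 hNb hNc.
  have -> : (((q ^ c + 1) * q) %/ 2 + (q - 1) * ((t + Nk q c * m) %/ P) + s)%N = n.
    apply/eqP; rewrite -eqz_nat; apply/eqP.
    rewrite !PoszD PoszM.
    have eq1 : (q - 1)%N%:Z = q%:Z - 1 by lia.
    rewrite eq1.
    apply: (@mulfI _ 2) => //.
    rewrite hn !mulrDr H0Z -/C; ring.
  exact: has_card_ext (E m) hc.
split => // f hf.
set Nc := Nk q c in hNc part1 *.
set H0 := (((q ^ c + 1) * q) %/ 2)%N in H0Z part1 *.
have -> : (\sum_(0 <= m < P) f m)%N = (\sum_(0 <= m < P) (H0 + (q - 1) * ((t + Nc * m) %/ P) + s))%N.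
  apply: eq_big_nat => m /andP [_ mP]; exact: card_uniq (hf m mP) (part1 m mP).
apply/eqP; rewrite -eqz_nat; apply/eqP.
rewrite (big_morph Posz PoszD (erefl _)).
have eq1 : (q - 1)%N%:Z = q%:Z - 1 by lia.
under eq_bigr do rewrite !PoszD PoszM eq1 -divz_nat PoszD PoszM [t%:Z + _]addrC.
rewrite !big_split /= !sumr_const_nat subn0 -big_distrr /=.
have copY : coprimez Nc%:Z P%:Z.
  have cq : coprimez Nc%:Z q%:Z.
    apply/coprimezP; exists (1, - (Nk q (c - 1))%:Z) => /=.
    have qn0 : q%:Z - 1 != 0 by lia.
    apply: (mulfI qn0).
    have h1 : ((q - 1) * Nc = q ^ c - 1)%N by rewrite Nk_mul.
    have h2 := Nk_mul q (c - 1).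
    have ec : ((c - 1).+1 = c)%N by rewrite /c /a; lia.
    have e : (q ^ c = q * q ^ (c - 1))%N by rewrite -expnS ec.
    have X1 : (1 <= q ^ (c - 1))%N by rewrite expn_gt0; lia.
    move: h1 h2 X1; rewrite e; move: (q ^ (c - 1))%N (Nk q (c - 1)) => X N' h1 h2 X1.
    have qX1 : (1 <= q * X)%N by rewrite muln_gt0; lia.
    move: (congr1 Posz h1) (congr1 Posz h2); rewrite !PoszM eq1 -!subzn // PoszM => h1Z h2Z.
    have -> : (q%:Z - 1) * (1 * Nc%:Z + - N'%:Z * q%:Z) = (q%:Z - 1) * Nc%:Z - q%:Z * ((q%:Z - 1) * N'%:Z) by ring.
    rewrite h1Z h2Z; ring.
  have -> : P%:Z = q%:Z ^+ (b - 1) by rewrite /P -natz natrX natz.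
  by rewrite coprimezXr.
have hY := sum_floor t%:Z P0 copY.
set SY := \sum_(0 <= i < P) _ in hY *.
have hX : (q%:Z - 1) * (Nc%:Z - 1) = C%:Z - q%:Z.
  have := congr1 Posz hNc; rewrite PoszM eq1 => h.
  have C1 : (1 <= C)%N by rewrite /C !muln_gt0; lia.
  rewrite -subzn // in h.
  rewrite mulrBr mulr1 h; ring.
set N := (q ^ (c + b - 1) + q ^ (c + b) - q ^ c + q)%N.
have eN : N%:Z = C%:Z * P%:Z + C%:Z * (q%:Z * P%:Z) - C%:Z + q%:Z.
  have e1 : (q ^ (c + b - 1))%N = (C * P)%N.
    have -> : (c + b - 1 = c + (b - 1))%N by lia.
    by rewrite expnD eC.
  have e2 : (q ^ (c + b))%N = (C * (q * P))%N by rewrite -eC -eQ -expnD.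
  have le : (C <= C * P + C * (q * P))%N by rewrite (leq_trans _ (leq_addl _ _)) // leq_pmulr // muln_gt0; lia.
  by rewrite /N e1 e2 eC PoszD -subzn // !PoszD !PoszM.
clearbody SY N H0 Nc C P.
have hN : (N %/ 2)%N%:Z = P%:Z * H0%:Z + (q%:Z - 1) * SY - (q%:Z - 1) * t%:Z.
  apply: half_of.
  rewrite eN.
  have -> : 2 * (P%:Z * H0%:Z + (q%:Z - 1) * SY - (q%:Z - 1) * t%:Z) =
     P%:Z * (2 * H0%:Z) + (q%:Z - 1) * (2 * SY) - 2 * (q%:Z - 1) * t%:Z by ring.
  rewrite H0Z hY.
  have -> : (q%:Z - 1) * ((Nc%:Z - 1) * (P%:Z - 1) + 2 * t%:Z) =
     ((q%:Z - 1) * (Nc%:Z - 1)) * (P%:Z - 1) + 2 * (q%:Z - 1) * t%:Z by ring.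
  rewrite hX. move: (P%:Z) (C%:Z) (q%:Z) (t%:Z) => P' C' q' t'. ring.
rewrite !PoszD !PoszM hN eq1 -mulr_natl natz -mulr_natl natz.
move: (P%:Z) (H0%:Z) (q%:Z) (t%:Z) (s%:Z) => P' H' q' t' s'. ring.
Qed.
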